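(* Let $\mathbb X=\mathbb X^1\times\mathbb X^2$, let $S\colon\mathbb X^1\rightrightarrows\mathbb X^2$ have closed graph, let $\Omega\subset\mathbb X^1$ be closed, and define $\Phi\colon\mathbb X\rightrightarrows\mathbb X^1\times\mathbb X^2$ by $\Phi(x):=(\Omega-x^1,\,S(x^1)-x^2)$ for $x=(x^1,x^2)$. Fix $(\bar x,0)\in\operatorname{gph}\Phi$ and $u=(u^1,u^2)\in\mathbb S_{\mathbb X}$. Write $y=(y^1,y^2)$ for elements of $\mathbb X^1\times\mathbb X^2$. (i) Suppose there is no nonzero $\lambda\in D^*S((\bar x^1,\bar x^2);(u^1,u^2))(0)\cap(-\mathcal N_\Omega(\bar x^1;u^1))$ for which there exist sequences $\{(x_k,y_k)\}\subset\operatorname{gph}\Phi$ with $x_k\ne\bar x$, $\{\lambda_k\},\{\eta_k\}\subset\mathbb X^1$, $\{\mu_k\}\subset\mathbb X^2$ with $x_k\to\bar x$, $y_k\to0$, $\lambda_k\to\lambda$, $\mu_k\to0$, $\eta_k\to0$, $(x_k-\bar x)/\|x_k-\bar x\|\to u$, $y_k/\|x_k-\bar x\|\to0$, and, for all $k$, $\eta_k+\lambda_k\in\widehat D^*S(x_k^1,x_k^2+y_k^2)(\mu_k)$, $-\lambda_k\in\widehat{\mathcal N}_\Omega(x_k^1+y_k^1)$, and $\langle\lambda,y_k^1\rangle>0$. Then $\Phi$ is pseudo-normal at $(\bar x,0)$ in direction $u$. (ii) Let $\mathcal E^j=\{e^j_1,\dots,e^j_{m_j}\}$ be an orthonormal basis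 of $\mathbb X^j$, $j=1,2$. Suppose there is no nonzero $\lambda$ as in (i) for which there exist sequences as in (i) satisfying the same convergences and, for all $k$ and $i\in\{1,\dots,m_1\}$, $\eta_k+\lambda_k\in\widehat D^*S(x_k^1,x_k^2+y_k^2)(\mu_k)$, $-\lambda_k\in\widehat{\mathcal N}_\Omega(x_k^1+y_k^1)$, and $\langle\lambda,e^1_i\rangle\langle y_k^1,e^1_i\rangle>0$ whenever $\langle\lambda,e^1_i\rangle\ne0$. Then $\Phi$ is quasi-normal at $(\bar x,0)$ in direction $u$ w.r.t. the orthonormal basis $\mathcal E^1\times\mathcal E^2$ of $\mathbb X$ (i.e. $\{(e^1_i,0)\}\cup\{(0,e^2_j)\}$).
   Context: $\widehat{\mathcal N}_\Omega$ regular normal cone; $\mathcal N_\Omega(\bar x^1;u^1)$ directional limiting normal cone (limits of $\eta_k\in\widehat{\mathcal N}_\Omega(\bar x^1+t_kw_k)$, $w_k\to u^1$, $t_k\searrow0$). $\widehat D^*S(x^1,x^2)(\mu)=\{\xi\mid(\xi,-\mu)\in\widehat{\mathcal N}_{\operatorname{gph}S}(x^1,x^2)\}$; $D^*S((\bar x^1,\bar x^2);(u^1,u^2))(\mu)=\{\xi\mid(\xi,-\mu)\in\mathcal N_{\operatorname{gph}S}((\bar x^1,\bar x^2);(u^1,u^2))\}$. Directional pseudo-/quasi-normality of a closed-graph map $\Phi\colon\mathbb X\rightrightarrows\mathbb Y$ at $(\bar x,\bar y)$ in direction $u$: there is no nonzero $\lambda$ with $0\in D^*\Phi((\bar x,\bar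 y);(u,0))(\lambda)$ for which there exist $\{(x_k,y_k)\}\subset\operatorname{gph}\Phi$, $x_k\ne\bar x$, $\{\lambda_k\}\subset\mathbb Y$, $\{\eta_k\}\subset\mathbb X$ with $x_k\to\bar x$, $y_k\to\bar y$, $\lambda_k\to\lambda$, $\eta_k\to0$, $(x_k-\bar x)/\|x_k-\bar x\|\to u$, $(y_k-\bar y)/\|x_k-\bar x\|\to0$, $\eta_k\in\widehat D^*\Phi(x_k,y_k)(\lambda_k)$ for all $k$, and (pseudo) $\langle\lambda,y_k-\bar y\rangle>0$ for all $k$, resp. (quasi, w.r.t. orthonormal basis $\{e_i\}$ of $\mathbb Y$) $\langle\lambda,e_i\rangle\langle y_k-\bar y,e_i\rangle>0$ whenever $\langle\lambda,e_i\rangle\ne0$. *)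

(* Defs.v *)
(* Euclidean spaces X^j are modelled as 'rV[R]_n over R : realType
   with the standard inner product; products X^1 x X^2 as 'rV_(n1+n2) via row_mx. *)
From HB Require Import structures.
From mathcomp Require Import all_boot all_order all_algebra.
From mathcomp Require Import reals.
Set Implicit Arguments. Unset Strict Implicit. Unset Printing Implicit Defensive.
Import Order.TTheory GRing.Theory Num.Theory.
Local Open Scope ring_scope.

Section Defs.
Variable R : realType.

Definition dotv n (u v : 'rV[R]_n) : R := \sum_(i < n) u 0 i * v 0 i.
Definition enorm n (u : 'rV[R]_n) : R := Num.sqrt (dotv u u).

Definition seq_cvg n (f : nat -> 'rV[R]_n) (l : 'rV[R]_n) : Prop :=
  forall e : R, 0 < e -> exists N : nat, forall k : nat, (N <= k)%N -> enorm (f k - l) < e.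
Definition rseq_cvg (f : nat -> R) (l : R) : Prop :=
  forall e : R, 0 < e -> exists N : nat, forall k : nat, (N <= k)%N -> `|f k - l| < e.

Definition closed_set n (A : 'rV[R]_n -> Prop) : Prop :=
  forall (f : nat -> 'rV[R]_n) (l : 'rV[R]_n), (forall k, A (f k)) -> seq_cvg f l -> A l.

Definition unit_sphere n (u : 'rV[R]_n) : Prop := enorm u = 1.

Definition reg_normal n (A : 'rV[R]_n -> Prop) (x v : 'rV[R]_n) : Prop :=
  A x /\ forall eps : R, 0 < eps -> exists2 delta : R, 0 < delta &
    forall x' : 'rV[R]_n, A x' -> enorm (x' - x) < delta ->
      dotv v (x' - x) <= eps * enorm (x' - x).

Definition dir_normal n (A : 'rV[R]_n -> Prop) (xb u v : 'rV[R]_n) : Prop :=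
  exists (t : nat -> R) (w eta : nat -> 'rV[R]_n),
    [/\ (forall k, 0 < t k), rseq_cvg t 0, seq_cvg w u, seq_cvg eta v &
        forall k, reg_normal A (xb + t k *: w k) (eta k)].

(* set-valued maps S : X ==> Y are relations 'rV_n -> 'rV_m -> Prop (y \in S x) *)
Definition gph n m (S : 'rV[R]_n -> 'rV[R]_m -> Prop) : 'rV[R]_(n + m) -> Prop :=
  fun z => S (lsubmx z) (rsubmx z).

Definition reg_coderiv n m (S : 'rV[R]_n -> 'rV[R]_m -> Prop)
  (x : 'rV[R]_n) (y mu : 'rV[R]_m) (xi : 'rV[R]_n) : Prop :=
  reg_normal (gph S) (row_mx x y) (row_mx xi (- mu)).

Definition dir_coderiv n m (S : 'rV[R]_n -> 'rV[R]_m -> Prop)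
  (x : 'rV[R]_n) (y : 'rV[R]_m) (u : 'rV[R]_n) (v : 'rV[R]_m)
  (mu : 'rV[R]_m) (xi : 'rV[R]_n) : Prop :=
  dir_normal (gph S) (row_mx x y) (row_mx u v) (row_mx xi (- mu)).

(* Existence of a "bad" multiplier lambda with sequences, for the directional
   pseudo-/quasi-normality definitions; cond lam (y_k - yb) is the sign condition. *)
Definition dir_normality_violated n m (Phi : 'rV[R]_n -> 'rV[R]_m -> Prop)
  (xb : 'rV[R]_n) (yb : 'rV[R]_m) (u : 'rV[R]_n)
  (cond : 'rV[R]_m -> 'rV[R]_m -> Prop) : Prop :=
  exists lam : 'rV[R]_m, lam != 0 /\ dir_coderiv Phi xb yb u 0 lam 0 /\
  exists (x : nat -> 'rV[R]_n) (y : nat -> 'rV[R]_m)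
         (lamk : nat -> 'rV[R]_m) (eta : nat -> 'rV[R]_n),
    (forall k, Phi (x k) (y k)) /\ (forall k, x k != xb) /\
    seq_cvg x xb /\ seq_cvg y yb /\ seq_cvg lamk lam /\ seq_cvg eta 0 /\
    seq_cvg (fun k => (enorm (x k - xb))^-1 *: (x k - xb)) u /\
    seq_cvg (fun k => (enorm (x k - xb))^-1 *: (y k - yb)) 0 /\
    (forall k, reg_coderiv Phi (x k) (y k) (lamk k) (eta k)) /\
    (forall k, cond lam (y k - yb)).

Definition dir_pseudo_normal n m (Phi : 'rV[R]_n -> 'rV[R]_m -> Prop)
  (xb : 'rV[R]_n) (yb : 'rV[R]_m) (u : 'rV[R]_n) : Prop :=
  ~ dir_normality_violated Phi xb yb u (fun lam d => 0 < dotv lam d).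

Definition dir_quasi_normal n m (Phi : 'rV[R]_n -> 'rV[R]_m -> Prop)
  (xb : 'rV[R]_n) (yb : 'rV[R]_m) (u : 'rV[R]_n) (e : 'I_m -> 'rV[R]_m) : Prop :=
  ~ dir_normality_violated Phi xb yb u
      (fun lam d => forall i : 'I_m, dotv lam (e i) != 0 ->
                      0 < dotv lam (e i) * dotv d (e i)).

Definition orthonormal_basis m (e : 'I_m -> 'rV[R]_m) : Prop :=
  forall i j : 'I_m, dotv (e i) (e j) = (i == j)%:R.

Definition prod_basis n1 n2 (e1 : 'I_n1 -> 'rV[R]_n1) (e2 : 'I_n2 -> 'rV[R]_n2)
  : 'I_(n1 + n2) -> 'rV[R]_(n1 + n2) :=
  fun i => match split i with
           | inl a => row_mx (e1 a) 0
           | inr b => row_mx 0 (e2 b)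
           end.

(* Phi(x) := (Omega - x^1, S(x^1) - x^2) *)
Definition PhiOS n1 n2 (Omega : 'rV[R]_n1 -> Prop) (S : 'rV[R]_n1 -> 'rV[R]_n2 -> Prop)
  : 'rV[R]_(n1 + n2) -> 'rV[R]_(n1 + n2) -> Prop :=
  fun x y => Omega (lsubmx y + lsubmx x) /\ S (lsubmx x) (rsubmx y + rsubmx x).

Definition thm7_violated n1 n2 (Omega : 'rV[R]_n1 -> Prop)
  (S : 'rV[R]_n1 -> 'rV[R]_n2 -> Prop) (xb1 : 'rV[R]_n1) (xb2 : 'rV[R]_n2)
  (u1 : 'rV[R]_n1) (u2 : 'rV[R]_n2) (cond : 'rV[R]_n1 -> 'rV[R]_n1 -> Prop) : Prop :=
  exists lam : 'rV[R]_n1, lam != 0 /\ dir_coderiv S xb1 xb2 u1 u2 0 lam /\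
    dir_normal Omega xb1 u1 (- lam) /\
  exists (x y : nat -> 'rV[R]_(n1 + n2)) (lamk eta : nat -> 'rV[R]_n1)
         (mu : nat -> 'rV[R]_n2),
    (forall k, PhiOS Omega S (x k) (y k)) /\
    (forall k, x k != row_mx xb1 xb2) /\
    seq_cvg x (row_mx xb1 xb2) /\ seq_cvg y 0 /\ seq_cvg lamk lam /\
    seq_cvg mu 0 /\ seq_cvg eta 0 /\
    seq_cvg (fun k => (enorm (x k - row_mx xb1 xb2))^-1 *: (x k - row_mx xb1 xb2))
            (row_mx u1 u2) /\
    seq_cvg (fun k => (enorm (x k - row_mx xb1 xb2))^-1 *: y k) 0 /\
    (forall k, reg_coderiv S (lsubmx (x k)) (rsubmx (x k) + rsubmx (y k)) (mu k)
                 (eta k + lamk k)) /\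
    (forall k, reg_normal Omega (lsubmx (x k) + lsubmx (y k)) (- lamk k)) /\
    (forall k, cond lam (lsubmx (y k))).

End Defs.

(* Main.v *)
Require Import Defs.
From HB Require Import structures.
From mathcomp Require Import all_boot all_order all_algebra.
From mathcomp Require Import reals.
From mathcomp Require Import ring lra.
Import Order.TTheory GRing.Theory Num.Theory.
Local Open Scope ring_scope.

Module Helpers.
Set Implicit Arguments. Unset Strict Implicit.

Section Norms.
Variable R : realType.
Implicit Types n m : nat.

Lemma dotvC n (a b : 'rV[R]_n) : dotv a b = dotv b a.
Proof. by rewrite /dotv; apply: eq_bigr => i _; rewrite mulrC. Qed.
Lemma dotvDl n (a b c : 'rV[R]_n) : dotv (a + b) c = dotv a c + dotv b c.
Proof. by rewrite /dotv -big_split; apply: eq_bigr => i _; rewrite mxE mulrDl. Qed.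
Lemma dotvDr n (a b c : 'rV[R]_n) : dotv c (a + b) = dotv c a + dotv c b.
Proof. by rewrite dotvC dotvDl !(dotvC c). Qed.
Lemma dotvZl n k (a b : 'rV[R]_n) : dotv (k *: a) b = k * dotv a b.
Proof. by rewrite /dotv mulr_sumr; apply: eq_bigr => i _; rewrite mxE mulrA. Qed.
Lemma dotvZr n k (a b : 'rV[R]_n) : dotv b (k *: a) = k * dotv b a.
Proof. by rewrite dotvC dotvZl dotvC. Qed.
Lemma dotvNl n (a b : 'rV[R]_n) : dotv (- a) b = - dotv a b.
Proof. by rewrite -scaleN1r dotvZl mulN1r. Qed.
Lemma dotvNr n (a b : 'rV[R]_n) : dotv b (- a) = - dotv b a.
Proof. by rewrite dotvC dotvNl dotvC. Qed.
Lemma dotv0l n (a : 'rV[R]_n) : dotv 0 a = 0.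
Proof. by rewrite /dotv big1 // => i _; rewrite mxE mul0r. Qed.
Lemma dotv0r n (a : 'rV[R]_n) : dotv a 0 = 0.
Proof. by rewrite dotvC dotv0l. Qed.
Lemma dotvBl n (a b c : 'rV[R]_n) : dotv (a - b) c = dotv a c - dotv b c.
Proof. by rewrite dotvDl dotvNl. Qed.
Lemma dotvBr n (a b c : 'rV[R]_n) : dotv c (a - b) = dotv c a - dotv c b.
Proof. by rewrite dotvDr dotvNr. Qed.
Lemma dotv_row n m (a c : 'rV[R]_n) (b d : 'rV[R]_m) :
  dotv (row_mx a b) (row_mx c d) = dotv a c + dotv b d.
Proof. by rewrite /dotv big_split_ord /=; congr (_ + _); apply: eq_bigr => i _;
  rewrite ?row_mxEl ?row_mxEr. Qed.
Lemma dotv_ge0 n (a : 'rV[R]_n) : 0 <= dotv a a.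
Proof. by apply: sumr_ge0 => i _; rewrite -expr2 sqr_ge0. Qed.
Lemma dotv_eq0 n (a : 'rV[R]_n) : dotv a a = 0 -> a = 0.
Proof.
move=> /eqP; rewrite /dotv psumr_eq0; last by move=> i _; rewrite -expr2 sqr_ge0.
move=> /allP H; apply/matrixP => i j; rewrite ord1 mxE.
have := H j (mem_index_enum j); rewrite /= mulf_eq0 orbb => /eqP //.
Qed.
Lemma enorm_ge0 n (a : 'rV[R]_n) : 0 <= enorm a.
Proof. exact: sqrtr_ge0. Qed.
Lemma enorm_sq n (a : 'rV[R]_n) : enorm a ^+ 2 = dotv a a.
Proof. by rewrite /enorm sqr_sqrtr // dotv_ge0. Qed.
Lemma enorm_eq0 n (a : 'rV[R]_n) : enorm a = 0 -> a = 0.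
Proof. by move=> h; apply: dotv_eq0; rewrite -enorm_sq h expr0n. Qed.
Lemma enorm0 n : enorm (0 : 'rV[R]_n) = 0.
Proof. by rewrite /enorm dotv0l sqrtr0. Qed.
Lemma enormZ n k (a : 'rV[R]_n) : enorm (k *: a) = `|k| * enorm a.
Proof. by rewrite /enorm dotvZl dotvZr mulrA -expr2 sqrtrM ?sqr_ge0 // sqrtr_sqr. Qed.
Lemma enormN n (a : 'rV[R]_n) : enorm (- a) = enorm a.
Proof. by rewrite -scaleN1r enormZ normrN1 mul1r. Qed.
Lemma le_enorm n m (a : 'rV[R]_n) (b : 'rV[R]_m) : dotv a a <= dotv b b -> enorm a <= enorm b.
Proof. by move=> h; rewrite /enorm ler_wsqrtr. Qed.

Lemma CS n (a b : 'rV[R]_n) : dotv a b ^+ 2 <= dotv a a * dotv b b.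
Proof.
have [/dotv_eq0 -> | hb] := eqVneq (dotv b b) 0.
  by rewrite dotv0r dotv0l expr0n mulr0.
have hb0 : 0 < dotv b b by rewrite lt_def hb dotv_ge0.
have := dotv_ge0 (dotv b b *: a - dotv a b *: b).
rewrite !(dotvBl, dotvBr, dotvZl, dotvZr) (dotvC b a) => h.
have : 0 <= dotv b b * (dotv a a * dotv b b - dotv a b ^+ 2).
  by move: h; congr (_ <= _); ring.
by rewrite pmulr_rge0 // subr_ge0.
Qed.
Lemma CSn n (a b : 'rV[R]_n) : dotv a b <= enorm a * enorm b.
Proof.
have h : `|dotv a b| <= enorm a * enorm b.
  rewrite -[enorm a * enorm b]ger0_norm ?mulr_ge0 ?enorm_ge0 //.
  rewrite -ler_sqr ?nnegrE ?normr_ge0 //.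
  by rewrite !real_normK ?num_real // exprMn !enorm_sq CS.
exact: le_trans (ler_norm _) h.
Qed.
Lemma enormD n (a b : 'rV[R]_n) : enorm (a + b) <= enorm a + enorm b.
Proof.
rewrite -ler_sqr ?nnegrE ?addr_ge0 ?enorm_ge0 //.
rewrite enorm_sq sqrrD !enorm_sq dotvDl !dotvDr (dotvC b a).
have := CSn a b; lra.
Qed.
Lemma enorm_row n m (a : 'rV[R]_n) (b : 'rV[R]_m) :
  enorm (row_mx a b) ^+ 2 = enorm a ^+ 2 + enorm b ^+ 2.
Proof. by rewrite !enorm_sq dotv_row. Qed.
Lemma enorm_rowl n m (a : 'rV[R]_n) (b : 'rV[R]_m) : enorm a <= enorm (row_mx a b).
Proof. by apply: le_enorm; rewrite dotv_row lerDl dotv_ge0. Qed.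
Lemma enorm_rowr n m (a : 'rV[R]_n) (b : 'rV[R]_m) : enorm b <= enorm (row_mx a b).
Proof. by apply: le_enorm; rewrite dotv_row lerDr dotv_ge0. Qed.
Lemma enorm_rowle n m (a : 'rV[R]_n) (b : 'rV[R]_m) : enorm (row_mx a b) <= enorm a + enorm b.
Proof.
rewrite -ler_sqr ?nnegrE ?addr_ge0 ?enorm_ge0 // enorm_row sqrrD.
have := enorm_ge0 a; have := enorm_ge0 b; nra.
Qed.
Lemma enorm_row0l n m (b : 'rV[R]_m) : enorm (row_mx (0 : 'rV[R]_n) b) = enorm b.
Proof. by rewrite /enorm dotv_row dotv0l add0r. Qed.
Lemma enorm_row0r n m (a : 'rV[R]_n) : enorm (row_mx a (0 : 'rV[R]_m)) = enorm a.
Proof. by rewrite /enorm dotv_row dotv0l addr0. Qed.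
End Norms.

Section Cvg.
Variable R : realType.

Lemma lsubmxD n m (a b : 'rV[R]_(n + m)) : lsubmx (a + b) = lsubmx a + lsubmx b.
Proof. by apply/matrixP => i j; rewrite !mxE. Qed.
Lemma rsubmxD n m (a b : 'rV[R]_(n + m)) : rsubmx (a + b) = rsubmx a + rsubmx b.
Proof. by apply/matrixP => i j; rewrite !mxE. Qed.
Lemma lsubmxN n m (a : 'rV[R]_(n + m)) : lsubmx (- a) = - lsubmx a.
Proof. by apply/matrixP => i j; rewrite !mxE. Qed.
Lemma rsubmxN n m (a : 'rV[R]_(n + m)) : rsubmx (- a) = - rsubmx a.
Proof. by apply/matrixP => i j; rewrite !mxE. Qed.
Lemma lsubmx0 n m : lsubmx (0 : 'rV[R]_(n + m)) = 0.
Proof. by apply/matrixP => i j; rewrite !mxE. Qed.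
Lemma rsubmx0 n m : rsubmx (0 : 'rV[R]_(n + m)) = 0.
Proof. by apply/matrixP => i j; rewrite !mxE. Qed.

Lemma cvg_ext n (f g : nat -> 'rV[R]_n) l : (forall k, f k = g k) -> seq_cvg f l -> seq_cvg g l.
Proof. by move=> h H e he; have [N HN] := H e he; exists N => k /HN; rewrite h. Qed.
Lemma cvg_cst n (l : 'rV[R]_n) : seq_cvg (fun=> l) l.
Proof. by move=> e he; exists 0%N => k _; rewrite subrr enorm0. Qed.
Lemma cvgD n (f g : nat -> 'rV[R]_n) l m : seq_cvg f l -> seq_cvg g m ->
  seq_cvg (fun k => f k + g k) (l + m).
Proof.
move=> Hf Hg e he.
have [N1 H1] := Hf (e / 2) (divr_gt0 he (ltr0Sn _ 1)).
have [N2 H2] := Hg (e / 2) (divr_gt0 he (ltr0Sn _ 1)).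
exists (maxn N1 N2) => k hk.
have h1 := H1 k (leq_trans (leq_maxl _ _) hk).
have h2 := H2 k (leq_trans (leq_maxr _ _) hk).
have -> : f k + g k - (l + m) = (f k - l) + (g k - m) by rewrite opprD !addrA (addrAC (f k)).
apply: le_lt_trans (enormD _ _) _; lra.
Qed.
Lemma cvgN n (f : nat -> 'rV[R]_n) l : seq_cvg f l -> seq_cvg (fun k => - f k) (- l).
Proof. by move=> H e he; have [N HN] := H e he; exists N => k /HN; rewrite -opprD enormN. Qed.
Lemma cvgB n (f g : nat -> 'rV[R]_n) l m : seq_cvg f l -> seq_cvg g m ->
  seq_cvg (fun k => f k - g k) (l - m).
Proof. by move=> Hf Hg; apply: cvgD => //; apply: cvgN. Qed.
Lemma cvg_lsub n m (f : nat -> 'rV[R]_(n + m)) l : seq_cvg f l ->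
  seq_cvg (fun k => lsubmx (f k)) (lsubmx l).
Proof.
move=> H e he; have [N HN] := H e he; exists N => k /HN h.
apply: le_lt_trans h; rewrite -[f k - l]hsubmxK lsubmxD lsubmxN; exact: enorm_rowl.
Qed.
Lemma cvg_rsub n m (f : nat -> 'rV[R]_(n + m)) l : seq_cvg f l ->
  seq_cvg (fun k => rsubmx (f k)) (rsubmx l).
Proof.
move=> H e he; have [N HN] := H e he; exists N => k /HN h.
apply: le_lt_trans h; rewrite -[f k - l]hsubmxK rsubmxD rsubmxN; exact: enorm_rowr.
Qed.
Lemma cvg_row n m (f : nat -> 'rV[R]_n) (g : nat -> 'rV[R]_m) l l' :
  seq_cvg f l -> seq_cvg g l' -> seq_cvg (fun k => row_mx (f k) (g k)) (row_mx l l').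
Proof.
move=> Hf Hg e he.
have [N1 H1] := Hf (e / 2) (divr_gt0 he (ltr0Sn _ 1)).
have [N2 H2] := Hg (e / 2) (divr_gt0 he (ltr0Sn _ 1)).
exists (maxn N1 N2) => k hk.
have h1 := H1 k (leq_trans (leq_maxl _ _) hk).
have h2 := H2 k (leq_trans (leq_maxr _ _) hk).
rewrite opp_row_mx add_row_mx; apply: le_lt_trans (enorm_rowle _ _) _; lra.
Qed.
Lemma cvg_uniq n (f : nat -> 'rV[R]_n) l m : seq_cvg f l -> seq_cvg f m -> l = m.
Proof.
move=> H1 H2; apply/eqP; rewrite -subr_eq0; apply/eqP/enorm_eq0.
apply/eqP; rewrite eq_le enorm_ge0 andbT; apply/ler_addgt0Pr => e he.
rewrite add0r.
have [N1 h1] := H1 (e / 2) (divr_gt0 he (ltr0Sn _ 1)).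
have [N2 h2] := H2 (e / 2) (divr_gt0 he (ltr0Sn _ 1)).
have a := h1 (maxn N1 N2) (leq_maxl _ _).
have b := h2 (maxn N1 N2) (leq_maxr _ _).
rewrite -enormN in a.
have -> : l - m = (- (f (maxn N1 N2) - l)) + (f (maxn N1 N2) - m) by rewrite opprB addrA subrK.
apply: le_trans (enormD _ _) _; lra.
Qed.
End Cvg.
Section More.
Variable R : realType.
Lemma lsubmxZ n m (c : R) (a : 'rV[R]_(n + m)) : lsubmx (c *: a) = c *: lsubmx a.
Proof. by apply/matrixP => i j; rewrite !mxE. Qed.
Lemma rsubmxZ n m (c : R) (a : 'rV[R]_(n + m)) : rsubmx (c *: a) = c *: rsubmx a.
Proof. by apply/matrixP => i j; rewrite !mxE. Qed.
End More.

Section Dec.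
Variable R : realType.
Variables (n1 n2 : nat) (Omega : 'rV[R]_n1 -> Prop) (S : 'rV[R]_n1 -> 'rV[R]_n2 -> Prop).

Lemma gph_row n m (P : 'rV[R]_n -> 'rV[R]_m -> Prop) x y : gph P (row_mx x y) <-> P x y.
Proof. by rewrite /gph row_mxKl row_mxKr. Qed.

Lemma reg_dec' (x1 y1 xi1 z1: 'rV[R]_n1) (x2 y2 xi2 z2 : 'rV[R]_n2) :
 reg_normal (gph (PhiOS Omega S)) (row_mx (row_mx x1 x2) (row_mx y1 y2))
   (row_mx (row_mx xi1 xi2) (row_mx z1 z2)) ->
 [/\ reg_normal Omega (y1 + x1) z1,
     reg_normal (gph S) (row_mx x1 (y2 + x2)) (row_mx (xi1 - z1) z2) & xi2 = z2].
Proof.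
move=> [Hin H].
move: Hin; rewrite gph_row /PhiOS !row_mxKl !row_mxKr => -[HO HS].
split.
- split => // eps he; have [d hd Hd] := H eps he; exists d => // w Hw Hn.
  have E : row_mx (row_mx x1 x2) (row_mx (w - x1) y2) - row_mx (row_mx x1 x2) (row_mx y1 y2)
     = row_mx 0 (row_mx (w - (y1 + x1)) 0).
    by rewrite !opp_row_mx !add_row_mx !subrr row_mx0 [y1 + x1]addrC opprD addrA.
  have := Hd (row_mx (row_mx x1 x2) (row_mx (w - x1) y2)).
  rewrite E enorm_row0l enorm_row0r !dotv_row dotv0r dotv0r add0r addr0.
  apply => //; rewrite gph_row /PhiOS !row_mxKl !row_mxKr subrK; split => //.
- split; first by rewrite gph_row.
  move=> eps he; have [d hd Hd] := H (eps / 2) (divr_gt0 he (ltr0Sn _ 1)).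
  exists (d / 2); first by rewrite divr_gt0.
  move=> w; rewrite -[w]hsubmxK; move: (lsubmx w) (rsubmx w) => a b.
  rewrite gph_row opp_row_mx add_row_mx => Hw Hn.
  have E : row_mx (row_mx a x2) (row_mx (y1 + x1 - a) (b - x2))
          - row_mx (row_mx x1 x2) (row_mx y1 y2)
     = row_mx (row_mx (a - x1) 0) (row_mx (- (a - x1)) (b - (y2 + x2))).
    rewrite !opp_row_mx !add_row_mx subrr opprB; congr row_mx; congr row_mx.
      by rewrite -(addrA y1) addrAC subrr add0r.
    by rewrite [y2 + x2]addrC opprD addrA.
  have HE : enorm (row_mx (row_mx (a - x1) (0 : 'rV_n2)) (row_mx (- (a - x1)) (b - (y2 + x2))))
      <= 2 * enorm (row_mx (a - x1) (b - (y2 + x2))).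
    apply: le_trans (enorm_rowle _ _) _; rewrite enorm_row0r mulr2n mulrDl mul1r.
    apply: lerD; first exact: enorm_rowl.
    by apply: le_enorm; rewrite !dotv_row dotvNl dotvNr opprK.
  have Hm : gph (PhiOS Omega S) (row_mx (row_mx a x2) (row_mx (y1 + x1 - a) (b - x2))).
    by rewrite gph_row /PhiOS !row_mxKl !row_mxKr !subrK.
  have HEd : enorm (row_mx (row_mx (a - x1) (0 : 'rV_n2)) (row_mx (- (a - x1)) (b - (y2 + x2)))) < d.
    apply: le_lt_trans HE _; lra.
  have := Hd _ Hm; rewrite E => /(_ HEd).
  rewrite !dotv_row dotv0r addr0 dotvBl dotvNr.
  have hN0 := enorm_ge0 (row_mx (a - x1) (b - (y2 + x2))).
  move: HE; set EN := enorm _; set N := enorm _ => HE h.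
  have : eps / 2 * EN <= eps / 2 * (2 * N) by rewrite ler_wpM2l // divr_ge0 // ltW.
  lra.
- apply/eqP; rewrite -subr_eq0; apply/eqP; apply: enorm_eq0.
  set v := xi2 - z2.
  have [hv0|hv] := eqVneq (enorm v) 0; first by [].
  have hvp : 0 < enorm v by rewrite lt_def hv enorm_ge0.
  have [d hd Hd] := H (enorm v / 4) (divr_gt0 hvp (ltr0Sn _ 3)).
  pose t := d / (4 * enorm v).
  have ht : 0 < t by rewrite divr_gt0 // mulr_gt0.
  have htv : t * enorm v = d / 4.
    by rewrite /t; field; rewrite gt_eqF.
  have Hm : gph (PhiOS Omega S) (row_mx (row_mx x1 (x2 + t *: v)) (row_mx y1 (y2 - t *: v))).
    by rewrite gph_row /PhiOS !row_mxKl !row_mxKr [x2 + _]addrC addrA subrK.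
  have E : row_mx (row_mx x1 (x2 + t *: v)) (row_mx y1 (y2 - t *: v))
          - row_mx (row_mx x1 x2) (row_mx y1 y2)
     = row_mx (row_mx 0 (t *: v)) (row_mx 0 (- (t *: v))).
    by rewrite !opp_row_mx !add_row_mx !subrr addrAC subrr add0r addrAC subrr add0r.
  have HE : enorm (row_mx (row_mx (0 : 'rV_n1) (t *: v)) (row_mx (0 : 'rV_n1) (- (t *: v))))
      <= d / 2.
    apply: le_trans (enorm_rowle _ _) _.
    rewrite !enorm_row0l enormN enormZ (ger0_norm (ltW ht)) htv; lra.
  have := Hd _ Hm; rewrite E => /(_ (le_lt_trans HE _)).
  rewrite !dotv_row !dotv0r !add0r dotvNr !dotvZr -mulrN -mulrDr -dotvBl -/v.
  rewrite -enorm_sq => h.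
  have {}h := h ltac:(lra).
  have : enorm v / 4 * enorm (row_mx (row_mx (0 : 'rV_n1) (t *: v)) (row_mx (0 : 'rV_n1) (- (t *: v))))
      <= enorm v / 4 * (d / 2) by rewrite ler_wpM2l // divr_ge0 // ltW.
  move: h; set EN := enorm (row_mx _ _) => h h2.
  have : t * enorm v ^+ 2 = d / 4 * enorm v by rewrite expr2 mulrA htv.
  nra.
Qed.

Lemma reg_dec (x y xi zeta : 'rV[R]_(n1 + n2)) :
 reg_normal (gph (PhiOS Omega S)) (row_mx x y) (row_mx xi zeta) ->
 [/\ reg_normal Omega (lsubmx y + lsubmx x) (lsubmx zeta),
     reg_normal (gph S) (row_mx (lsubmx x) (rsubmx y + rsubmx x))
        (row_mx (lsubmx xi - lsubmx zeta) (rsubmx zeta)) &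
     rsubmx xi = rsubmx zeta].
Proof.
by rewrite -[x]hsubmxK -[y]hsubmxK -[xi]hsubmxK -[zeta]hsubmxK => /reg_dec';
  rewrite !row_mxKl !row_mxKr.
Qed.
End Dec.

Section Tr.
Variable R : realType.
Variables (n1 n2 : nat) (Omega : 'rV[R]_n1 -> Prop) (S : 'rV[R]_n1 -> 'rV[R]_n2 -> Prop).
Variables (xb1 u1 : 'rV[R]_n1) (xb2 u2 : 'rV[R]_n2).

Lemma transfer (condP : 'rV[R]_(n1+n2) -> 'rV[R]_(n1+n2) -> Prop)
  (cond7 : 'rV[R]_n1 -> 'rV[R]_n1 -> Prop) :
 (forall lam1 v, condP (row_mx lam1 0) (v - 0) -> cond7 lam1 (lsubmx v)) ->
 dir_normality_violated (PhiOS Omega S) (row_mx xb1 xb2) 0 (row_mx u1 u2) condP ->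
 thm7_violated Omega S xb1 xb2 u1 u2 cond7.
Proof.
move=> Hc [lam [lam0 [Hdir [x [y [lamk [eta [HP [Hne [Hx [Hy [Hl [He [Hu [Hyn [Hreg Hcond]]]]]]]]]]]]]]]].
have D k := reg_dec (Hreg k).
have Hmu : seq_cvg (fun k => rsubmx (lamk k)) 0.
  apply: (@cvg_ext _ _ (fun k => - rsubmx (eta k))).
    by move=> k; case: (D k) => _ _ ->; rewrite rsubmxN opprK.
  by have := cvgN (cvg_rsub He); rewrite rsubmx0 oppr0.
have hl2 : rsubmx lam = 0 by apply: (cvg_uniq (cvg_rsub Hl) Hmu).
have hlam : lam = row_mx (lsubmx lam) 0 by rewrite -{1}[lam]hsubmxK hl2.
exists (lsubmx lam); split.
  by apply: contra lam0 => /eqP h; rewrite hlam h row_mx0.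
move: Hdir => [t [w [nu [Ht Ht0 Hw Hnu Hr]]]].
have Hr' k := reg_dec (x := lsubmx (row_mx (row_mx xb1 xb2) 0 + t k *: w k))
   (y := rsubmx (row_mx (row_mx xb1 xb2) 0 + t k *: w k))
   (xi := lsubmx (nu k)) (zeta := rsubmx (nu k)) ltac:(by rewrite !hsubmxK).
split.
  exists t, (fun k => row_mx (lsubmx (lsubmx (w k))) (rsubmx (rsubmx (w k)) + rsubmx (lsubmx (w k)))),
    (fun k => row_mx (lsubmx (lsubmx (nu k)) - lsubmx (rsubmx (nu k))) (rsubmx (rsubmx (nu k)))).
  split => //.
  - have := cvg_row (cvg_lsub (cvg_lsub Hw)) (cvgD (cvg_rsub (cvg_rsub Hw)) (cvg_rsub (cvg_lsub Hw))).
    by rewrite !row_mxKl !row_mxKr rsubmx0 add0r.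
  - have := cvg_row (cvgB (cvg_lsub (cvg_lsub Hnu)) (cvg_lsub (cvg_rsub Hnu))) (cvg_rsub (cvg_rsub Hnu)).
    by rewrite !row_mxKl !row_mxKr lsubmx0 lsubmxN rsubmxN hl2 sub0r !opprK oppr0.
  - move=> k; case: (Hr' k) => _ H2 _; move: H2.
    rewrite !(lsubmxD, rsubmxD, lsubmxZ, rsubmxZ, row_mxKl, row_mxKr, lsubmx0, rsubmx0, add0r).
    by rewrite scale_row_mx add_row_mx scalerDr addrCA.
split.
  exists t, (fun k => lsubmx (rsubmx (w k)) + lsubmx (lsubmx (w k))),
    (fun k => lsubmx (rsubmx (nu k))).
  split => //.
  - have := cvgD (cvg_lsub (cvg_rsub Hw)) (cvg_lsub (cvg_lsub Hw)).
    by rewrite !row_mxKl !row_mxKr lsubmx0 add0r.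
  - have := cvg_lsub (cvg_rsub Hnu).
    by rewrite !row_mxKr lsubmxN.
  - move=> k; case: (Hr' k) => H1 _ _; move: H1.
    rewrite !(lsubmxD, rsubmxD, lsubmxZ, rsubmxZ, row_mxKl, row_mxKr, lsubmx0, rsubmx0, add0r).
    by rewrite scalerDr addrCA.
exists x, y, (fun k => lsubmx (lamk k)), (fun k => lsubmx (eta k)), (fun k => rsubmx (lamk k)).
do 5 (split => //).
  exact: cvg_lsub.
split => //.
split; first by have := cvg_lsub He; rewrite lsubmx0.
split => //.
split; first by apply: cvg_ext Hyn => k; rewrite subr0.
split.
  move=> k; case: (D k) => _ H2 _; move: H2.
  by rewrite lsubmxN rsubmxN opprK [rsubmx (y k) + _]addrC.
split.
  move=> k; case: (D k) => H1 _ _; move: H1.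
  by rewrite lsubmxN [lsubmx (y k) + _]addrC.
by move=> k; apply: Hc; rewrite -hlam.
Qed.
End Tr.
End Helpers.
Import Helpers.

Theorem mainTheorem7 (R : realType) (n1 n2 : nat)
  (S : 'rV[R]_n1 -> 'rV[R]_n2 -> Prop) (Omega : 'rV[R]_n1 -> Prop)
  (xb1 : 'rV[R]_n1) (xb2 : 'rV[R]_n2) (u1 : 'rV[R]_n1) (u2 : 'rV[R]_n2) :
  closed_set (gph S) -> closed_set Omega ->
  PhiOS Omega S (row_mx xb1 xb2) 0 ->
  unit_sphere (row_mx u1 u2) ->
  (~ thm7_violated Omega S xb1 xb2 u1 u2 (fun lam y1 => 0 < dotv lam y1) ->
     dir_pseudo_normal (PhiOS Omega S) (row_mx xb1 xb2) 0 (row_mx u1 u2)) /\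
  (forall (e1 : 'I_n1 -> 'rV[R]_n1) (e2 : 'I_n2 -> 'rV[R]_n2),
     orthonormal_basis e1 -> orthonormal_basis e2 ->
     ~ thm7_violated Omega S xb1 xb2 u1 u2
         (fun lam y1 => forall i : 'I_n1, dotv lam (e1 i) != 0 ->
                          0 < dotv lam (e1 i) * dotv y1 (e1 i)) ->
     dir_quasi_normal (PhiOS Omega S) (row_mx xb1 xb2) 0 (row_mx u1 u2)
       (prod_basis e1 e2)).
Proof.
move=> _ _ _ _; split.
  move=> H7 V; apply: H7; apply: (transfer _ V) => lam1 v.
  by rewrite subr0 -[v]hsubmxK dotv_row row_mxKl dotv0l addr0.
move=> e1 e2 _ _ H7 V; apply: H7; apply: (transfer _ V) => lam1 v.
rewrite subr0 => h i hi.
have pb : prod_basis e1 e2 (lshift n2 i) = row_mx (e1 i) 0.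
  by rewrite /prod_basis -[lshift n2 i]/(unsplit (inl i)) unsplitK.
have := h (lshift n2 i); rewrite pb !dotv_row dotv0l addr0.
move=> /(_ hi); rewrite -[v]hsubmxK dotv_row dotv0r addr0 row_mxKl; exact: id.
Qed.
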